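(* Let $\mathcal{B}\models I\Sigma_1$. The set $M^{good}_B(\mathcal{B})$ of $B\times B$-matrices over $B$ that are good in $\mathcal{B}$ is closed under matrix multiplication (where the product $P=MN$ is given by $P_{ij}=\sum_{k} M_{ik}N_{kj}$, the sum computed in $\mathcal{B}$).
   Context: $I\Sigma_1$ is Robinson arithmetic with $\Sigma_1$-induction, in which Gödel coding of finite sets is available; a set $X\subseteq B^n$ is coded in $\mathcal{B}$ if some element of $B$ is, in $\mathcal{B}$, a set whose members are exactly those of $X$. A matrix $M=(M_{ij})_{i,j\in B}$ with entries in $B$ is good in $\mathcal{B}$ if for every $J\in B$ there is $I\in B$ such that (i) all non-zero entries $M_{ij}$ with $j<J$ have $i<I$, and (ii) the restricted matrix $(M_{ij})_{i<I,j<J}$ is coded in $\mathcal{B}$ (equivalently, for every $J$ the set $\{(i,j,M_{ij}): j<J, M_{ij}\neq0\}$ is coded in $\mathcal{B}$). *)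

(* Defs.v *)
Inductive term : Type :=
| tVar : nat -> term              (* de Bruijn index *)
| tZero : term
| tSucc : term -> term
| tPlus : term -> term -> term
| tTimes : term -> term -> term.

Inductive formula : Type :=
| fEq : term -> term -> formula
| fNot : formula -> formula
| fAnd : formula -> formula -> formula
| fOr : formula -> formula -> formula
| fImp : formula -> formula -> formula
| fAll : formula -> formula
| fEx : formula -> formula
| fBAll : term -> formula -> formula   (* forall x < t, phi   (t in outer context) *)
| fBEx : term -> formula -> formula.

Fixpoint is_delta0 (f : formula) : bool :=
  match f with
  | fEq _ _ => true
  | fNot g => is_delta0 g
  | fAnd g h | fOr g h | fImp g h => is_delta0 g && is_delta0 h
  | fAll _ | fEx _ => false
  | fBAll _ g | fBEx _ g => is_delta0 g
  end.

Fixpoint is_sigma1 (f : formula) : bool :=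
  match f with
  | fEx g => is_sigma1 g
  | _ => is_delta0 f
  end.

Record arith_structure : Type := {
  carrier :> Type;
  zeroA : carrier;
  succA : carrier -> carrier;
  addA : carrier -> carrier -> carrier;
  mulA : carrier -> carrier -> carrier }.

Section Semantics.
Variable B : arith_structure.

Definition ltA (x y : B) : Prop := exists z, addA B x (succA B z) = y.

Definition scons (b : B) (rho : nat -> B) : nat -> B :=
  fun n => match n with 0 => b | S m => rho m end.

Fixpoint evalt (rho : nat -> B) (t : term) : B :=
  match t with
  | tVar n => rho n
  | tZero => zeroA B
  | tSucc u => succA B (evalt rho u)
  | tPlus u v => addA B (evalt rho u) (evalt rho v)
  | tTimes u v => mulA B (evalt rho u) (evalt rho v)
  end.

Fixpoint sat (rho : nat -> B) (f : formula) : Prop :=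
  match f with
  | fEq u v => evalt rho u = evalt rho v
  | fNot g => ~ sat rho g
  | fAnd g h => sat rho g /\ sat rho h
  | fOr g h => sat rho g \/ sat rho h
  | fImp g h => sat rho g -> sat rho h
  | fAll g => forall b, sat (scons b rho) g
  | fEx g => exists b, sat (scons b rho) g
  | fBAll t g => forall b, ltA b (evalt rho t) -> sat (scons b rho) g
  | fBEx t g => exists b, ltA b (evalt rho t) /\ sat (scons b rho) g
  end.

Definition models_Q : Prop :=
  (forall x, succA B x <> zeroA B) /\
  (forall x y, succA B x = succA B y -> x = y) /\
  (forall x, x <> zeroA B -> exists y, x = succA B y) /\
  (forall x, addA B x (zeroA B) = x) /\
  (forall x y, addA B x (succA B y) = succA B (addA B x y)) /\
  (forall x, mulA B x (zeroA B) = zeroA B) /\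
  (forall x y, mulA B x (succA B y) = addA B (mulA B x y) x).

(* Induction for Sigma_1 formulas with parameters (variable 0 is the induction variable) *)
Definition sigma1_induction : Prop :=
  forall phi, is_sigma1 phi = true ->
  forall rho : nat -> B,
    sat (scons (zeroA B) rho) phi ->
    (forall b, sat (scons b rho) phi -> sat (scons (succA B b) rho) phi) ->
    forall b, sat (scons b rho) phi.

Definition models_ISigma1 : Prop := models_Q /\ sigma1_induction.

(* Cantor pairing:  z = <i,j>  iff  2z = (i+j)(i+j+1) + 2i *)
Definition pairA (i j z : B) : Prop :=
  addA B z z = addA B (mulA B (addA B i j) (succA B (addA B i j))) (addA B i i).

Definition modA (c m r : B) : Prop :=
  exists q, c = addA B (mulA B q m) r /\ ltA r m.

Definition betaA (c d k v : B) : Prop :=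
  modA c (succA B (mulA B (succA B k) d)) v.

(* x is a member of the finite set coded by s:  s = <n,<c,d>> and
   x = beta(c,d,k) for some k < n *)
Definition memA (x s : B) : Prop :=
  exists n c d p, pairA c d p /\ pairA n p s /\
    exists k, ltA k n /\ betaA c d k x.

Definition tripleA (i j v t : B) : Prop :=
  exists p, pairA j v p /\ pairA i p t.

Definition coded3 (X : B -> B -> B -> Prop) : Prop :=
  exists s, forall t, memA t s <-> exists i j v, tripleA i j v t /\ X i j v.

Definition good (M : B -> B -> B) : Prop :=
  forall J, exists I,
    (forall i j, ltA j J -> M i j <> zeroA B -> ltA i I) /\
    coded3 (fun i j v => ltA i I /\ ltA j J /\ v = M i j).

(* v is the entry P_ij = sum_k M_ik N_kj of the product, computed in B:
   all terms with k >= K vanish and v is the K-th partial sum, the sequence of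
   partial sums being (beta-)coded in B. *)
Definition prod_entry (M N : B -> B -> B) (i j v : B) : Prop :=
  exists K,
    (forall k, ~ ltA k K -> mulA B (M i k) (N k j) = zeroA B) /\
    exists c d,
      betaA c d (zeroA B) (zeroA B) /\
      (forall k a, ltA k K -> betaA c d k a ->
         betaA c d (succA B k) (addA B a (mulA B (M i k) (N k j)))) /\
      betaA c d K v.

End Semantics.

(* Main.v *)
Require Import Defs.
From Stdlib Require Import Setoid Morphisms Ring Classical ClassicalEpsilon.

Section Arith.
Variable B : arith_structure.
Hypothesis HQ : models_Q B.
Hypothesis HI : sigma1_induction B.

Local Notation o := (zeroA B).
Local Notation sc := (succA B).
Local Notation "x +' y" := (addA B x y) (at level 50, left associativity).
Local Notation "x *' y" := (mulA B x y) (at level 40, left associativity).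
Local Notation lt := (ltA B).

Lemma q_sn0 x : sc x <> o. Proof. apply HQ. Qed.
Lemma q_sinj x y : sc x = sc y -> x = y. Proof. apply HQ. Qed.
Lemma q_pred x : x <> o -> exists y, x = sc y. Proof. apply HQ. Qed.
Lemma q_add0 x : x +' o = x. Proof. apply HQ. Qed.
Lemma q_addS x y : x +' sc y = sc (x +' y). Proof. apply HQ. Qed.
Lemma q_mul0 x : x *' o = o. Proof. apply HQ. Qed.
Lemma q_mulS x y : x *' sc y = x *' y +' x. Proof. apply HQ. Qed.

Lemma zero_or_succ x : x = o \/ exists y, x = sc y.
Proof. destruct (classic (x = o)); [left; auto| right; apply q_pred; auto]. Qed.

Definition env0 : nat -> B := fun _ => o.

Lemma ind1 (phi : formula) (rho : nat -> B) (P : B -> Prop) :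
  is_sigma1 phi = true -> (forall b, sat B (scons B b rho) phi <-> P b) ->
  P o -> (forall b, P b -> P (sc b)) -> forall b, P b.
Proof.
  intros Hs Hiff H0 HS b. apply Hiff. apply HI; auto.
  - apply Hiff; auto.
  - intros c Hc. apply Hiff. apply HS. apply Hiff. auto.
Qed.

Ltac ind phi rho :=
  match goal with |- forall b, @?P b =>
    apply (ind1 phi rho P); [reflexivity | intro; simpl; try reflexivity | | ] end.

Lemma add0l : forall x, o +' x = x.
Proof.
  ind (fEq (tPlus tZero (tVar 0)) (tVar 0)) env0.
  - apply q_add0.
  - intros b H. rewrite q_addS, H. auto.
Qed.

Lemma addSl : forall x y, sc x +' y = sc (x +' y).
Proof.
  intros x. ind (fEq (tPlus (tSucc (tVar 1)) (tVar 0)) (tSucc (tPlus (tVar 1) (tVar 0)))) (scons B x env0).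
  - rewrite !q_add0; auto.
  - intros b H. rewrite !q_addS, H. auto.
Qed.

Lemma addC : forall x y, x +' y = y +' x.
Proof.
  intros x. ind (fEq (tPlus (tVar 1) (tVar 0)) (tPlus (tVar 0) (tVar 1))) (scons B x env0).
  - rewrite q_add0, add0l; auto.
  - intros b H. rewrite q_addS, addSl, H. auto.
Qed.

Lemma addA_ : forall x y z, x +' y +' z = x +' (y +' z).
Proof.
  intros x y. ind (fEq (tPlus (tPlus (tVar 1) (tVar 2)) (tVar 0)) (tPlus (tVar 1) (tPlus (tVar 2) (tVar 0)))) (scons B x (scons B y env0)).
  - rewrite !q_add0; auto.
  - intros b H. rewrite !q_addS, H. auto.
Qed.

Lemma mul0l : forall x, o *' x = o.
Proof.
  ind (fEq (tTimes tZero (tVar 0)) tZero) env0.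
  - apply q_mul0.
  - intros b H. rewrite q_mulS, H, q_add0. auto.
Qed.

Lemma mulSl : forall x y, sc x *' y = x *' y +' y.
Proof.
  intros x. ind (fEq (tTimes (tSucc (tVar 1)) (tVar 0)) (tPlus (tTimes (tVar 1) (tVar 0)) (tVar 0))) (scons B x env0).
  - rewrite !q_mul0, q_add0; auto.
  - intros b H. rewrite !q_mulS, H, !q_addS, !addA_. f_equal. f_equal. apply addC.
Qed.

Lemma mulC : forall x y, x *' y = y *' x.
Proof.
  intros x. ind (fEq (tTimes (tVar 1) (tVar 0)) (tTimes (tVar 0) (tVar 1))) (scons B x env0).
  - rewrite q_mul0, mul0l; auto.
  - intros b H. rewrite q_mulS, mulSl, H. auto.
Qed.

Lemma mulDr : forall x y z, x *' (y +' z) = x *' y +' x *' z.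
Proof.
  intros x y. ind (fEq (tTimes (tVar 1) (tPlus (tVar 2) (tVar 0))) (tPlus (tTimes (tVar 1) (tVar 2)) (tTimes (tVar 1) (tVar 0)))) (scons B x (scons B y env0)).
  - rewrite q_add0, q_mul0, q_add0; auto.
  - intros b H. rewrite q_addS, !q_mulS, H, addA_. auto.
Qed.

Lemma mulA_ : forall x y z, x *' y *' z = x *' (y *' z).
Proof.
  intros x y. ind (fEq (tTimes (tTimes (tVar 1) (tVar 2)) (tVar 0)) (tTimes (tVar 1) (tTimes (tVar 2) (tVar 0)))) (scons B x (scons B y env0)).
  - rewrite !q_mul0; auto.
  - intros b H. rewrite !q_mulS, H, mulDr. auto.
Qed.

Lemma Bsrt : semi_ring_theory o (sc o) (addA B) (mulA B) eq.
Proof.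
  constructor.
  - apply add0l.
  - apply addC.
  - intros; symmetry; apply addA_.
  - intros. rewrite mulSl, mul0l, add0l. auto.
  - apply mul0l.
  - apply mulC.
  - intros; symmetry; apply mulA_.
  - intros x y z. rewrite (mulC (_ +' _)), mulDr, !(mulC z). auto.
Qed.

Add Ring Bring : Bsrt.

Lemma succ_eq x : sc x = x +' sc o.
Proof. rewrite q_addS, q_add0. auto. Qed.


Ltac unS := repeat match goal with |- context [sc ?x] => lazymatch x with o => fail | _ => rewrite (succ_eq x) end end.
Ltac unSin H := repeat match type of H with context [sc ?x] => lazymatch x with o => fail | _ => rewrite (succ_eq x) in H end end.
Ltac sring := unS; ring.

Definition le x y := exists z, x +' z = y.

Lemma add_cancel_r : forall z x y, x +' z = y +' z -> x = y.
Proof.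
  intros z x y. revert z.
  ind (fImp (fEq (tPlus (tVar 1) (tVar 0)) (tPlus (tVar 2) (tVar 0))) (fEq (tVar 1) (tVar 2))) (scons B x (scons B y env0)).
  - rewrite !q_add0; auto.
  - intros b H E. rewrite !q_addS in E. apply H, q_sinj, E.
Qed.

Lemma add_cancel_l z x y : z +' x = z +' y -> x = y.
Proof. rewrite (addC z x), (addC z y). apply add_cancel_r. Qed.

Lemma add_eq0 x y : x +' y = o -> x = o /\ y = o.
Proof.
  intros E. destruct (zero_or_succ y) as [->|[y' ->]].
  - rewrite q_add0 in E; auto.
  - rewrite q_addS in E. exfalso; eapply q_sn0; eauto.
Qed.

Lemma lt_le x y : lt x y <-> le (sc x) y.
Proof.
  split; intros [z Hz]; exists z; rewrite <- Hz; sring.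
Qed.

Lemma le_refl x : le x x. Proof. exists o. apply q_add0. Qed.
Lemma le_trans x y z : le x y -> le y z -> le x z.
Proof. intros [a Ha] [b Hb]. exists (a +' b). rewrite <- Hb, <- Ha. ring. Qed.
Lemma le0 x : le o x. Proof. exists x. apply add0l. Qed.
Lemma le_addr x y : le x (x +' y). Proof. exists y; auto. Qed.
Lemma le_addl x y : le x (y +' x). Proof. exists y; ring. Qed.

Lemma lt_irrefl x : ~ lt x x.
Proof.
  intros [z Hz]. apply (q_sn0 z). apply (add_cancel_l x). rewrite Hz, q_add0. auto.
Qed.

Lemma le_antisym x y : le x y -> le y x -> x = y.
Proof.
  intros [a Ha] [b Hb]. assert (E : x +' (a +' b) = x +' o).
  { rewrite q_add0. rewrite <- Hb at 2. rewrite <- Ha. ring. }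
  apply add_cancel_l in E. apply add_eq0 in E. destruct E as [-> _].
  rewrite q_add0 in Ha. auto.
Qed.

Lemma le_total : forall x y, le x y \/ le y x.
Proof.
  intros x y. revert x.
  ind (fEx (fOr (fEq (tPlus (tVar 1) (tVar 0)) (tVar 2)) (fEq (tPlus (tVar 2) (tVar 0)) (tVar 1)))) (scons B y env0).
  - unfold le; split; [intros [z [H|H]]; eauto | intros [[z H]|[z H]]; eauto].
  - left. apply le0.
  - intros b [[z Hz]|[z Hz]].
    + destruct (zero_or_succ z) as [->|[z' ->]].
      * right. exists (sc o). rewrite q_add0 in Hz. subst. sring.
      * left. exists z'. rewrite <- Hz. sring.
    + right. exists (sc z). rewrite <- Hz. sring.
Qed.

Lemma le_lt_eq x y : le x y <-> lt x y \/ x = y.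
Proof.
  split.
  - intros [z Hz]. destruct (zero_or_succ z) as [->|[z' ->]].
    + right. rewrite q_add0 in Hz. auto.
    + left. exists z'. auto.
  - intros [[z Hz]| ->]; [exists (sc z); auto| apply le_refl].
Qed.

Lemma lt_to_le x y : lt x y -> le x y.
Proof. intros H; apply le_lt_eq; auto. Qed.

Lemma lt_or_le x y : lt x y \/ le y x.
Proof.
  destruct (le_total x y) as [H|H]; auto.
  apply le_lt_eq in H. destruct H as [H| ->]; auto. right; apply le_refl.
Qed.

Lemma not_lt_le x y : ~ lt x y -> le y x.
Proof. intros H. destruct (lt_or_le x y); tauto. Qed.

Lemma lt_le_trans x y z : lt x y -> le y z -> lt x z.
Proof. intros H1 H2. apply lt_le in H1. apply lt_le. eapply le_trans; eauto. Qed.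

Lemma le_lt_trans x y z : le x y -> lt y z -> lt x z.
Proof. intros H1 H2. apply lt_le in H2. apply lt_le. eapply le_trans; eauto.
  destruct H1 as [a Ha]. exists a. rewrite <- Ha. sring. Qed.

Lemma lt_trans x y z : lt x y -> lt y z -> lt x z.
Proof. intros H1 H2. eapply lt_le_trans; eauto. apply lt_to_le; auto. Qed.

Lemma le_not_lt x y : le x y -> ~ lt y x.
Proof. intros H1 H2. apply (lt_irrefl x). eapply le_lt_trans; eauto. Qed.

Lemma lt_not_le x y : lt x y -> ~ le y x.
Proof. intros H1 H2. apply (lt_irrefl x). eapply lt_le_trans; eauto. Qed.

Lemma not_lt0 x : ~ lt x o.
Proof. intros [z Hz]. rewrite q_addS in Hz. eapply q_sn0; eauto. Qed.

Lemma lt_S x y : lt x (sc y) <-> le x y.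
Proof.
  split.
  - intros [z Hz]. exists z. apply q_sinj. rewrite <- Hz, q_addS. auto.
  - intros [z Hz]. exists z. rewrite q_addS, Hz. auto.
Qed.

Lemma lt_Sn x : lt x (sc x). Proof. apply lt_S, le_refl. Qed.

Lemma lt0S x : lt o (sc x). Proof. apply lt_S, le0. Qed.

Lemma le_add_mono x y a b : le x y -> le a b -> le (x +' a) (y +' b).
Proof. intros [z Hz] [w Hw]. exists (z +' w). rewrite <- Hz, <- Hw. ring. Qed.

Lemma le_add_cancel a x y : le (x +' a) (y +' a) -> le x y.
Proof. intros [z Hz]. exists z. apply (add_cancel_r a). rewrite <- Hz. ring. Qed.

Lemma lt_add_mono x y a b : lt x y -> le a b -> lt (x +' a) (y +' b).
Proof. intros H1 H2. apply lt_le in H1. apply lt_le.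
  replace (sc (x +' a)) with (sc x +' a) by sring. apply le_add_mono; auto. Qed.

Lemma le_mul_mono x y a b : le x y -> le a b -> le (x *' a) (y *' b).
Proof. intros [z Hz] [w Hw]. exists (z *' a +' x *' w +' z *' w). rewrite <- Hz, <- Hw. ring. Qed.

Lemma mul_eq0 x y : x *' y = o -> x = o \/ y = o.
Proof.
  intros E. destruct (zero_or_succ x) as [->|[x' ->]]; auto.
  destruct (zero_or_succ y) as [->|[y' ->]]; auto.
  exfalso. rewrite q_mulS in E. apply add_eq0 in E. destruct E as [_ E]. eapply q_sn0; eauto.
Qed.

Lemma lt_mul_mono_r x y a : lt x y -> a <> o -> lt (x *' a) (y *' a).
Proof.
  intros [z Hz] Ha. destruct (zero_or_succ a) as [->|[a' ->]]; [congruence|].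
  exists (z *' sc a' +' a'). rewrite <- Hz. sring.
Qed.

Lemma mul_cancel_r a x y : a <> o -> x *' a = y *' a -> x = y.
Proof.
  intros Ha E. destruct (lt_or_le x y) as [H|H].
  - exfalso. apply (lt_mul_mono_r _ _ _ H) in Ha. rewrite E in Ha. eapply lt_irrefl; eauto.
  - apply le_lt_eq in H. destruct H as [H|H]; auto.
    exfalso. apply (lt_mul_mono_r _ _ _ H) in Ha. rewrite E in Ha. eapply lt_irrefl; eauto.
Qed.

Lemma le_mul_self x a : a <> o -> le x (x *' a).
Proof.
  intros Ha. destruct (zero_or_succ a) as [->|[a' ->]]; [congruence|].
  exists (x *' a'). sring.
Qed.

Lemma lt_pos x : x <> o -> lt o x.
Proof. intros H. destruct (zero_or_succ x) as [->|[y ->]]; [congruence| apply lt0S]. Qed.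

Lemma lt_ne0 x y : lt x y -> y <> o.
Proof. intros H E. subst. eapply not_lt0; eauto. Qed.

Lemma div_exists m : m <> o -> forall c, exists q r, c = q *' m +' r /\ lt r m.
Proof.
  intros Hm.
  ind (fEx (fEx (fAnd (fEq (tVar 2) (tPlus (tTimes (tVar 1) (tVar 3)) (tVar 0)))
          (fBEx (tVar 3) (fEq (tVar 0) (tVar 1)))))) (scons B m env0).
  - split; intros [q [r [H1 H2]]]; exists q, r; split; auto.
    + destruct H2 as [w [Hw ->]]; auto.
    + exists r; auto.
  - exists o, o. split; [ring| apply lt_pos; auto].
  - intros b [q [r [-> Hr]]].
    apply lt_le, le_lt_eq in Hr. destruct Hr as [Hr|Hr].
    + exists q, (sc r). split; auto. sring.
    + exists (sc q), o. split; [rewrite <- Hr; sring| apply lt_pos; auto].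
Qed.

Lemma div_unique m q r q' r' : q *' m +' r = q' *' m +' r' -> lt r m -> lt r' m -> q = q' /\ r = r'.
Proof.
  intros E H1 H2.
  assert (forall a a' b b', lt a a' -> lt b m -> a *' m +' b = a' *' m +' b' -> False) as K.
  { clear E H1 H2. intros a a' b b' Hq Hr E.
    apply lt_le in Hq. destruct Hq as [z Hz]. subst a'.
    assert (lt (a *' m +' b) (a *' m +' m)) by (rewrite (addC (a *' m) b), (addC (a *' m) m); apply lt_add_mono; auto; apply le_refl).
    rewrite E in H. apply (lt_not_le _ _ H). exists (z *' m +' b'). sring. }
  destruct (lt_or_le q q') as [Hq|Hq]; [exfalso; eauto|].
  apply le_lt_eq in Hq. destruct Hq as [Hq| ->]; [exfalso; eauto|].
  split; auto. eapply add_cancel_l; eauto.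
Qed.

Lemma mod_unique c m r r' : modA B c m r -> modA B c m r' -> r = r'.
Proof.
  intros [q [E1 H1]] [q' [E2 H2]]. rewrite E1 in E2.
  apply (div_unique _ _ _ _ _ E2 H1 H2).
Qed.

Lemma mod_exists c m : m <> o -> exists r, modA B c m r.
Proof. intros Hm. destruct (div_exists m Hm c) as [q [r [E H]]]. exists r, q. auto. Qed.

Lemma mod_small c m : lt c m -> modA B c m c.
Proof. intros H. exists o. split; auto. ring. Qed.

Lemma mod_add c m r b : modA B c m r -> modA B (c +' b *' m) m r.
Proof. intros [q [E H]]. exists (q +' b). split; auto. rewrite E. ring. Qed.

Lemma mod_le c m r : modA B c m r -> le r c.
Proof. intros [q [E H]]. exists (q *' m). rewrite E. ring. Qed.

Lemma mod_ne0 c m r : modA B c m r -> m <> o.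
Proof. intros [q [E H]]. eapply lt_ne0; eauto. Qed.

Lemma le_double x y : le (x +' x) (y +' y) -> le x y.
Proof.
  intros H. destruct (lt_or_le y x) as [H1|H1]; auto.
  exfalso. apply (le_not_lt _ _ H). apply lt_add_mono; auto. apply lt_to_le; auto.
Qed.

Lemma double_inj x y : x +' x = y +' y -> x = y.
Proof.
  intros E. apply le_antisym; apply le_double; rewrite E; apply le_refl.
Qed.

Lemma parity : forall x, exists y, x = y +' y \/ x = sc (y +' y).
Proof.
  ind (fEx (fOr (fEq (tVar 1) (tPlus (tVar 0) (tVar 0))) (fEq (tVar 1) (tSucc (tPlus (tVar 0) (tVar 0)))))) env0.
  - exists o. left. ring.
  - intros b [y [->| ->]].
    + exists y. right. auto.
    + exists (sc y). left. sring.
Qed.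

Lemma pair_exists i j : exists z, pairA B i j z.
Proof.
  unfold pairA. set (s := i +' j).
  destruct (parity s) as [y [Hy|Hy]].
  - exists (y *' sc s +' i). rewrite Hy. sring.
  - exists (sc (y +' y) *' sc y +' i). rewrite Hy. sring.
Qed.

Lemma pair_fun i j z z' : pairA B i j z -> pairA B i j z' -> z = z'.
Proof. unfold pairA. intros H1 H2. apply double_inj. congruence. Qed.

Lemma le_S_mono x y : le x y -> le (sc x) (sc y).
Proof. intros [z Hz]. exists z. rewrite <- Hz. sring. Qed.

Lemma pair_le_l i j z : pairA B i j z -> le i z.
Proof.
  unfold pairA. intros H. apply le_double. rewrite H. apply le_addl.
Qed.

Lemma pair_le_r i j z : pairA B i j z -> le j z.
Proof.
  unfold pairA. intros H. apply le_double. rewrite H.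
  replace ((i +' j) *' sc (i +' j) +' (i +' i)) with ((i +' j) *' (i +' j) +' (i +' j +' (i +' i))) by sring.
  apply le_add_mono; [| apply le_trans with (i +' j); [apply le_addl | apply le_addr]].
  destruct (zero_or_succ (i +' j)) as [E|[w E]].
  + rewrite E. apply add_eq0 in E. destruct E as [-> ->]. apply le0.
  + apply le_trans with (i +' j). { apply le_addl. }
    rewrite E. exists (w *' sc w). sring.
Qed.

Lemma pair_inj i j i' j' z : pairA B i j z -> pairA B i' j' z -> i = i' /\ j = j'.
Proof.
  unfold pairA. intros H1 H2.
  assert (K : forall i j i' j', lt (i +' j) (i' +' j') ->
     lt ((i +' j) *' sc (i +' j) +' (i +' i)) ((i' +' j') *' sc (i' +' j') +' (i' +' i'))).
  { clear H1 H2 i j i' j'. intros i j i' j' H. set (s := i +' j) in *. set (s' := i' +' j') in *.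
    apply lt_le_trans with (s' *' sc s').
    - apply lt_le_trans with (sc s *' sc (sc s)).
      + apply lt_le_trans with (s *' sc s +' (s +' s) +' sc o).
        * rewrite <- succ_eq. apply lt_S. apply le_add_mono; [apply le_refl|].
          apply le_add_mono; unfold s; apply le_addr.
        * exists (sc o). unfold s. sring.
      + apply lt_le in H. apply le_mul_mono; auto. apply le_S_mono. auto.
    - apply le_addr. }
  destruct (lt_or_le (i +' j) (i' +' j')) as [H|H].
  { exfalso. apply K in H. rewrite <- H1, <- H2 in H. eapply lt_irrefl; eauto. }
  apply le_lt_eq in H. destruct H as [H|H].
  { exfalso. apply K in H. rewrite <- H1, <- H2 in H. eapply lt_irrefl; eauto. }
  rewrite <- H in H1. rewrite H1 in H2. apply add_cancel_l in H2. apply double_inj in H2.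
  subst. split; auto. eapply add_cancel_l; eauto.
Qed.

Lemma triple_exists i j v : exists t, tripleA B i j v t.
Proof.
  destruct (pair_exists j v) as [p Hp]. destruct (pair_exists i p) as [t Ht].
  exists t, p. auto.
Qed.

Lemma triple_fun i j v t t' : tripleA B i j v t -> tripleA B i j v t' -> t = t'.
Proof.
  intros [p [H1 H2]] [p' [H1' H2']]. rewrite (pair_fun _ _ _ _ H1 H1') in H2.
  eapply pair_fun; eauto.
Qed.

Lemma triple_inj i j v i' j' v' t : tripleA B i j v t -> tripleA B i' j' v' t -> i = i' /\ j = j' /\ v = v'.
Proof.
  intros [p [H1 H2]] [p' [H1' H2']]. destruct (pair_inj _ _ _ _ _ H2 H2') as [-> ->].
  destruct (pair_inj _ _ _ _ _ H1 H1') as [-> ->]. auto.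
Qed.

Lemma triple_le i j v t : tripleA B i j v t -> le i t /\ le j t /\ le v t.
Proof.
  intros [p [H1 H2]]. split; [eapply pair_le_l; eauto|].
  split; eapply le_trans; [eapply pair_le_l; eauto| eapply pair_le_r; eauto| eapply pair_le_r; eauto| eapply pair_le_r; eauto].
Qed.

Fixpoint lift (t : term) : term :=
  match t with
  | tVar n => tVar (S n)
  | tZero => tZero
  | tSucc u => tSucc (lift u)
  | tPlus u v => tPlus (lift u) (lift v)
  | tTimes u v => tTimes (lift u) (lift v)
  end.

Lemma evalt_lift rho b t : evalt B (scons B b rho) (lift t) = evalt B rho t.
Proof. induction t; simpl; congruence. Qed.

Local Notation ev := (evalt B).

Definition fLt (a b : term) : formula := fBEx b (fEq (tVar 0) (lift a)).
Lemma sat_fLt rho a b : sat B rho (fLt a b) <-> lt (ev rho a) (ev rho b).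
Proof. unfold fLt; simpl. repeat setoid_rewrite evalt_lift. split; [intros [x [H ->]]; auto| intros H; eauto]. Qed.
Lemma d0_fLt a b : is_delta0 (fLt a b) = true. Proof. reflexivity. Qed.
Opaque fLt.

Definition fLe (a b : term) : formula := fLt a (tSucc b).
Lemma sat_fLe rho a b : sat B rho (fLe a b) <-> le (ev rho a) (ev rho b).
Proof. unfold fLe. rewrite sat_fLt. simpl. apply lt_S. Qed.
Lemma d0_fLe a b : is_delta0 (fLe a b) = true. Proof. reflexivity. Qed.
Opaque fLe.

Definition fmod (c m r : term) : formula :=
  fBEx (tSucc c) (fAnd (fEq (lift c) (tPlus (tTimes (tVar 0) (lift m)) (lift r))) (fLt (lift r) (lift m))).
Lemma sat_fmod rho c m r : sat B rho (fmod c m r) <-> modA B (ev rho c) (ev rho m) (ev rho r).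
Proof.
  unfold fmod; simpl. setoid_rewrite sat_fLt. simpl. repeat setoid_rewrite evalt_lift.
  split.
  - intros [q [_ [H1 H2]]]. exists q. auto.
  - intros [q [H1 H2]]. exists q. split; auto. apply lt_S. rewrite H1.
    apply le_trans with (q *' ev rho m); [apply le_mul_self; eapply lt_ne0; eauto| apply le_addr].
Qed.
Lemma d0_fmod c m r : is_delta0 (fmod c m r) = true. Proof. reflexivity. Qed.
Opaque fmod.

Definition fbeta (c d k v : term) : formula := fmod c (tSucc (tTimes (tSucc k) d)) v.
Lemma sat_fbeta rho c d k v : sat B rho (fbeta c d k v) <-> betaA B (ev rho c) (ev rho d) (ev rho k) (ev rho v).
Proof. unfold fbeta. rewrite sat_fmod. reflexivity. Qed.
Lemma d0_fbeta c d k v : is_delta0 (fbeta c d k v) = true. Proof. reflexivity. Qed.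
Opaque fbeta.

Definition fpair (i j z : term) : formula :=
  fEq (tPlus z z) (tPlus (tTimes (tPlus i j) (tSucc (tPlus i j))) (tPlus i i)).
Lemma sat_fpair rho i j z : sat B rho (fpair i j z) <-> pairA B (ev rho i) (ev rho j) (ev rho z).
Proof. reflexivity. Qed.
Lemma d0_fpair i j z : is_delta0 (fpair i j z) = true. Proof. reflexivity. Qed.
Opaque fpair.

Definition ftriple (i j v t : term) : formula :=
  fBEx (tSucc t) (fAnd (fpair (lift j) (lift v) (tVar 0)) (fpair (lift i) (tVar 0) (lift t))).
Lemma sat_ftriple rho i j v t : sat B rho (ftriple i j v t) <-> tripleA B (ev rho i) (ev rho j) (ev rho v) (ev rho t).
Proof.
  unfold ftriple. simpl. setoid_rewrite sat_fpair. simpl. repeat setoid_rewrite evalt_lift. split.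
  - intros [p [_ H]]. exists p. auto.
  - intros [p H]. exists p. split; auto. apply lt_S. eapply pair_le_r. apply H.
Qed.
Lemma d0_ftriple i j v t : is_delta0 (ftriple i j v t) = true. Proof. reflexivity. Qed.
Opaque ftriple.

Definition fmem (t s : term) : formula :=
  fBEx (tSucc s) (fBEx (tSucc (lift s)) (fBEx (tSucc (tVar 0)) (fBEx (tSucc (tVar 1))
    (fAnd (fpair (tVar 1) (tVar 0) (tVar 2)) (fAnd (fpair (tVar 3) (tVar 2) (lift (lift (lift (lift s)))))
       (fBEx (tVar 3) (fbeta (tVar 2) (tVar 1) (tVar 0) (lift (lift (lift (lift (lift t)))))))))))).
Lemma sat_fmem rho t s : sat B rho (fmem t s) <-> memA B (ev rho t) (ev rho s).
Proof.
  unfold fmem. simpl. setoid_rewrite sat_fbeta. setoid_rewrite sat_fpair. simpl. repeat setoid_rewrite evalt_lift. simpl. split.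
  - intros [n [_ [p [_ [c [_ [d [_ [H1 [H2 [k [Hk H3]]]]]]]]]]]]. exists n, c, d, p. split; [exact H1| split; [exact H2| exists k; split; [exact Hk| exact H3]]].
  - intros [n [c [d [p [H1 [H2 [k [Hk H3]]]]]]]]. exists n. split.
    { apply lt_S. eapply pair_le_l; eauto. }
    exists p. split. { apply lt_S. eapply pair_le_r; eauto. }
    exists c. split. { apply lt_S. eapply pair_le_l; eauto. }
    exists d. split. { apply lt_S. eapply pair_le_r; eauto. }
    eauto.
Qed.
Lemma d0_fmem t s : is_delta0 (fmem t s) = true. Proof. reflexivity. Qed.
Opaque fmem.


Record Pred2 := { p2f : (nat -> term) -> term -> term -> formula;
  p2s : (nat -> B) -> B -> B -> Prop;
  p2spec : forall rho ps x y, sat B rho (p2f ps x y) <-> p2s (fun i => ev rho (ps i)) (ev rho x) (ev rho y);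
  p2d0 : forall ps x y, is_delta0 (p2f ps x y) = true }.

Record Pred3 := { p3f : (nat -> term) -> term -> term -> term -> formula;
  p3s : (nat -> B) -> B -> B -> B -> Prop;
  p3spec : forall rho ps x y z, sat B rho (p3f ps x y z) <-> p3s (fun i => ev rho (ps i)) (ev rho x) (ev rho y) (ev rho z);
  p3d0 : forall ps x y z, is_delta0 (p3f ps x y z) = true }.

Ltac ssat1 := first [ setoid_rewrite sat_fLe | setoid_rewrite sat_fLt | setoid_rewrite sat_fmod
  | setoid_rewrite sat_fbeta | setoid_rewrite sat_fpair | setoid_rewrite sat_ftriple | setoid_rewrite sat_fmem
  | setoid_rewrite evalt_lift | setoid_rewrite p2spec | setoid_rewrite p3spec ].
Ltac ssat := simpl; repeat (ssat1; simpl).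

Ltac d0tac := simpl; repeat (rewrite ?d0_fLt, ?d0_fLe, ?d0_fmod, ?d0_fbeta, ?d0_fpair, ?d0_ftriple, ?d0_fmem, ?p2d0, ?p3d0; simpl); reflexivity.

Ltac indf phi rho :=
  match goal with |- forall b, @?P b =>
    apply (ind1 phi rho P); [d0tac | intro | | ] end.

Lemma collect (chi : Pred2) p n : (forall k, lt k n -> exists x, p2s chi p k x) ->
  exists W, forall k, lt k n -> exists x, lt x W /\ p2s chi p k x.
Proof.
  intros H.
  cut (forall m, exists W, forall k, lt k m -> lt k n -> exists x, lt x W /\ p2s chi p k x).
  { intros K. destruct (K n) as [W HW]. exists W. auto. }
  indf (fEx (fBAll (tVar 1) (fImp (fLt (tVar 0) (tVar 3)) (fBEx (tVar 1) (p2f chi (fun i => tVar (5+i)) (tVar 1) (tVar 0)))))) (scons B n p).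
  - ssat. reflexivity.
  - exists o. intros k Hk. exfalso. eapply not_lt0; eauto.
  - intros m [W HW]. destruct (lt_or_le m n) as [Hm|Hm].
    + destruct (H m Hm) as [x Hx]. exists (W +' sc x). intros k Hk Hkn.
      apply lt_S, le_lt_eq in Hk. destruct Hk as [Hk| ->].
      * destruct (HW k Hk Hkn) as [y [Hy1 Hy2]]. exists y. split; auto.
        eapply lt_le_trans; eauto. apply le_addr.
      * exists x. split; auto. rewrite q_addS. apply lt_S. apply le_addl.
    + exists W. intros k Hk Hkn. apply lt_S, le_lt_eq in Hk. destruct Hk as [Hk| ->]; auto.
      exfalso. eapply le_not_lt; eauto.
Qed.

Definition Inv (Q m : B) := exists u, lt u m /\ modA B (u *' Q) m (sc o).

Lemma mod_add_inv c m r b : modA B (c +' b *' m) m r -> modA B c m r.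
Proof.
  intros H. destruct (mod_exists c m (mod_ne0 _ _ _ H)) as [r' Hr'].
  rewrite (mod_unique _ _ _ _ H (mod_add _ _ _ b Hr')). auto.
Qed.

Lemma inv_of_eq Q m u : modA B (u *' Q) m (sc o) -> Inv Q m.
Proof.
  intros H. destruct (div_exists m (mod_ne0 _ _ _ H) u) as [a [u' [-> Hu']]].
  exists u'. split; auto. apply (mod_add_inv _ _ _ (a *' Q)).
  replace (u' *' Q +' a *' Q *' m) with ((a *' m +' u') *' Q) by ring. auto.
Qed.

Lemma inv_mul Q1 Q2 m : Inv Q1 m -> Inv Q2 m -> Inv (Q1 *' Q2) m.
Proof.
  intros [u1 [_ [q1 [E1 H1]]]] [u2 [_ [q2 [E2 H2]]]].
  apply (inv_of_eq _ _ (u1 *' u2)). exists (q1 *' q2 *' m +' q1 +' q2). split; auto.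
  replace (u1 *' u2 *' (Q1 *' Q2)) with ((u1 *' Q1) *' (u2 *' Q2)) by ring.
  rewrite E1, E2. sring.
Qed.

Definition mk (d k : B) := sc (sc k *' d).

Lemma d_exists V : forall N, exists d, d <> o /\ le V d /\
  forall e, lt e (sc N) -> e <> o -> exists x, x *' e = d.
Proof.
  indf (fEx (fAnd (fNot (fEq (tVar 0) tZero)) (fAnd (fLe (tVar 2) (tVar 0))
      (fBAll (tSucc (tVar 1)) (fOr (fEq (tVar 0) tZero) (fBEx (tSucc (tVar 1)) (fEq (tTimes (tVar 0) (tVar 1)) (tVar 2)))))))) (scons B V env0).
  - ssat. setoid_rewrite lt_S. split.
    + intros [d [H1 [H2 H3]]]. exists d. split; [auto|split; [auto|]].
      intros e He He0. destruct (H3 e He) as [H|[x [_ Hx]]]; [congruence| eauto].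
    + intros [d [H1 [H2 H3]]]. exists d. split; [auto|split; [auto|]].
      intros e He. destruct (classic (e = o)) as [E|E]; auto. right.
      destruct (H3 e He E) as [x Hx]. exists x. split; auto. rewrite <- Hx. apply le_mul_self; auto.
  - exists (sc V). split; [apply q_sn0|]. split; [exists (sc o); sring|].
    intros e He He0. exfalso. apply lt_S in He. apply He0. apply le_antisym; auto. apply le0.
  - intros N [d [H1 [H2 H3]]]. exists (d *' sc N). split.
    { intros E. apply mul_eq0 in E. destruct E as [E|E]; [congruence| eapply q_sn0; eauto]. }
    split. { eapply le_trans; eauto. apply le_mul_self. apply q_sn0. }
    intros e He He0. apply lt_S, le_lt_eq in He. destruct He as [He| ->].
    + destruct (H3 e He He0) as [x Hx]. exists (x *' sc N). rewrite <- Hx. ring.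
    + exists d. auto.
Qed.

Lemma inv_explicit d N n k : d <> o -> (forall e, lt e (sc N) -> e <> o -> exists x, x *' e = d) ->
  lt n k -> le k N -> Inv (mk d n) (mk d k).
Proof.
  intros Hd Hdiv [h Hh] HkN.
  destruct (Hdiv (sc h)) as [f Hf]; [|apply q_sn0|].
  { apply lt_S. eapply le_trans; [|exact HkN]. exists n. rewrite <- Hh. ring. }
  destruct (zero_or_succ f) as [->|[g ->]]. { rewrite mul0l in Hf. congruence. }
  subst d k. unfold mk.
  set (A := sc (n +' sc h)).
  apply (inv_of_eq _ _ (A *' A *' A *' (sc g *' sc h) *' sc g)).
  exists (A *' A *' sc g *' sc g *' sc h *' sc n +' A *' sc h *' g +' A *' h +' n +' h +' sc o).
  split.
  - unfold A. sring.
  - apply lt_S. exists ((n +' sc h) *' (sc g *' sc h) +' (g *' sc h +' h)). unfold A. sring.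
Qed.

Lemma beta_fun c d k a a' : betaA B c d k a -> betaA B c d k a' -> a = a'.
Proof. apply mod_unique. Qed.

Lemma le_lt_mk a d k : le a d -> lt a (mk d k).
Proof. intros H. unfold mk. apply lt_S. eapply le_trans; eauto. exists (k *' d). sring. Qed.

Lemma mk_ne0 d k : mk d k <> o. Proof. apply q_sn0. Qed.

Lemma seq_code (phi : Pred3) (iota : Pred2) (p : nat -> B) (d N : B) :
  d <> o -> (forall e, lt e (sc N) -> e <> o -> exists x, x *' e = d) ->
  (exists a0, p2s iota p o a0) ->
  (forall k a, lt k N -> p2s iota p k a -> exists v, p3s phi p k a v /\ p2s iota p (sc k) v) ->
  (forall k a, le k N -> p2s iota p k a -> le a d) ->
  exists c, (forall k, le k N -> exists a, betaA B c d k a /\ p2s iota p k a) /\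
    (forall k a v, lt k N -> betaA B c d k a -> betaA B c d (sc k) v -> p3s phi p k a v).
Proof.
  intros Hd Hdiv [a0 Ha0] Hstep Hbnd.
  cut (forall n, exists c Q, le n N ->
    (forall k, lt k (sc n) -> exists a, lt a (sc c) /\ betaA B c d k a /\ p2s iota p k a) /\
    (forall k, lt k n -> exists a, lt a (sc c) /\ exists v, lt v (sc c) /\ betaA B c d k a /\ betaA B c d (sc k) v /\ p3s phi p k a v) /\
    (forall k, lt k (sc n) -> exists x, lt x (sc Q) /\ x *' sc (sc k *' d) = Q) /\
    (forall k, lt k (sc N) -> le k n \/ exists u, lt u (sc (sc k *' d)) /\ modA B (u *' Q) (sc (sc k *' d)) (sc o))).
  { intros K. destruct (K N) as [c [Q H]]. destruct (H (le_refl N)) as [HA [HB' _]].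
    exists c. split.
    - intros k Hk. destruct (HA k (proj2 (lt_S _ _) Hk)) as [a [_ Ha]]. eauto.
    - intros k a v Hk Ha Hv. destruct (HB' k Hk) as [a' [_ [v' [_ [Ha' [Hv' Hp]]]]]].
      rewrite (beta_fun _ _ _ _ _ Ha Ha'), (beta_fun _ _ _ _ _ Hv Hv'). auto. }
  indf (fEx (fEx (fImp (fLe (tVar 2) (tVar 4))
    (fAnd (fBAll (tSucc (tVar 2)) (fBEx (tSucc (tVar 2))
             (fAnd (fbeta (tVar 3) (tVar 5) (tVar 1) (tVar 0)) (p2f iota (fun i => tVar (7+i)) (tVar 1) (tVar 0)))))
    (fAnd (fBAll (tVar 2) (fBEx (tSucc (tVar 2)) (fBEx (tSucc (tVar 3))
             (fAnd (fbeta (tVar 4) (tVar 6) (tVar 2) (tVar 1)) (fAnd (fbeta (tVar 4) (tVar 6) (tSucc (tVar 2)) (tVar 0))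
                (p3f phi (fun i => tVar (8+i)) (tVar 2) (tVar 1) (tVar 0)))))))
    (fAnd (fBAll (tSucc (tVar 2)) (fBEx (tSucc (tVar 1))
             (fEq (tTimes (tVar 0) (tSucc (tTimes (tSucc (tVar 1)) (tVar 5)))) (tVar 2))))
          (fBAll (tSucc (tVar 4)) (fOr (fLe (tVar 0) (tVar 3))
             (fBEx (tSucc (tTimes (tSucc (tVar 0)) (tVar 4)))
                (fmod (tTimes (tVar 0) (tVar 2)) (tSucc (tTimes (tSucc (tVar 1)) (tVar 5))) (tSucc tZero))))))))))) (scons B d (scons B N p)).
  - ssat. reflexivity.
  - exists a0, (mk d o). intros _.
    assert (Ha0d : le a0 d) by (apply (Hbnd o); auto; apply le0).
    split; [|split; [|split]].
    + intros k Hk. apply lt_S in Hk. assert (k = o) by (apply le_antisym; auto; apply le0). subst k.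
      exists a0. split; [apply lt_Sn|]. split; auto. apply mod_small. apply le_lt_mk; auto.
    + intros k Hk. exfalso; eapply not_lt0; eauto.
    + intros k Hk. apply lt_S in Hk. assert (k = o) by (apply le_antisym; auto; apply le0). subst k.
      exists (sc o). split; [|unfold mk; ring]. apply lt_S. unfold mk. apply le_S_mono, le0.
    + intros k Hk. destruct (lt_or_le o k) as [H|H].
      * right. apply (inv_explicit d N o k); auto. apply lt_S; auto.
      * left; auto.
  - intros n [c [Q IH]].
    destruct (classic (le (sc n) N)) as [HnN|HnN]; [| exists o, o; intros H; contradiction].
    assert (HnN' : le n N) by (eapply le_trans; [|exact HnN]; apply lt_to_le, lt_Sn).
    assert (HltN : lt n N) by (apply lt_le; auto).
    destruct (IH HnN') as [SA [SB [SC SD]]].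
    destruct (SA n (lt_Sn n)) as [a [_ [Ha Hia]]].
    destruct (Hstep n a HltN Hia) as [v [Hphi Hiv]].
    set (m := mk d (sc n)).
    destruct (SD (sc n)) as [Hc|[u [_ [q [Hu _]]]]]. { apply lt_S; auto. } { exfalso. eapply lt_irrefl. apply lt_S; eauto. }
    assert (Hvm : lt v m) by (apply le_lt_mk; apply (Hbnd (sc n)); auto).
    set (E := sc (sc n) *' d).
    assert (HmE : m = sc E) by reflexivity.
    set (c' := c +' (v +' E *' c) *' u *' Q).
    assert (F1 : betaA B c' d (sc n) v).
    { unfold betaA. fold (mk d (sc n)). fold m.
      replace c' with (v +' (c +' (v +' E *' c) *' q) *' m).
      - apply mod_add, mod_small; auto.
      - unfold c'. replace ((v +' E *' c) *' u *' Q) with ((v +' E *' c) *' (u *' Q)) by ring.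
        rewrite Hu. unfold m, E, mk. sring. }
    assert (F2 : forall k a, lt k (sc n) -> betaA B c d k a -> betaA B c' d k a).
    { intros k a' Hk Hb. destruct (SC k Hk) as [x [_ Hx]]. unfold c'. rewrite <- Hx.
      replace (c +' (v +' E *' c) *' u *' (x *' sc (sc k *' d))) with (c +' ((v +' E *' c) *' u *' x) *' mk d k) by (unfold mk; ring).
      apply mod_add. auto. }
    assert (Hbd : forall x y z, x *' y = z -> y <> o -> lt x (sc z)).
    { intros x y z Hxy Hy. apply lt_S. rewrite <- Hxy. apply le_mul_self; auto. }
    assert (Hc' : forall k a, betaA B c' d k a -> lt a (sc c')).
    { intros k a' H. apply lt_S. eapply mod_le; eauto. }
    exists c', (Q *' m). intros _. split; [|split; [|split]].
    + intros k Hk. apply lt_S, le_lt_eq in Hk. destruct Hk as [Hk| ->].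
      * destruct (SA k Hk) as [a' [_ [Hb Hi]]]. exists a'. apply F2 in Hb; auto. split; eauto.
      * exists v. split; eauto.
    + intros k Hk. apply lt_S, le_lt_eq in Hk. destruct Hk as [Hk'| ->].
      *         destruct (SB k Hk') as [a' [_ [v' [_ [Hb1 [Hb2 Hp]]]]]].
        apply F2 in Hb1; [|eapply lt_trans; [exact Hk'| apply lt_Sn]].
        apply F2 in Hb2; [|apply lt_S, lt_le; auto].
        exists a'. split; eauto. exists v'. split; eauto.
      * apply F2 in Ha; [|apply lt_Sn]. exists a. split; eauto. exists v. split; eauto.
    + intros k Hk. apply lt_S, le_lt_eq in Hk. destruct Hk as [Hk| ->].
      * destruct (SC k Hk) as [x [_ Hx]]. exists (x *' m).
        assert (E2 : x *' m *' sc (sc k *' d) = Q *' m) by (rewrite <- Hx; ring).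
        split; auto. eapply Hbd; eauto. apply q_sn0.
      * exists Q. split; auto. eapply Hbd; [reflexivity| apply q_sn0].
    + intros k Hk. destruct (classic (le k (sc n))) as [H|H]; [left; auto|right].
      assert (Hnk : lt (sc n) k) by (destruct (lt_or_le (sc n) k); tauto).
      destruct (SD k Hk) as [H'|HQ'].
      { exfalso. apply H. eapply le_trans; eauto. apply lt_to_le, lt_Sn. }
      apply (inv_mul Q m (mk d k)); [exact HQ'|].
      apply (inv_explicit d N (sc n) k); auto. apply lt_S; auto.
Qed.

Lemma mem_le t s : memA B t s -> le t s.
Proof.
  intros [n [c [d [p [H1 [H2 [k [_ H3]]]]]]]].
  eapply le_trans; [eapply mod_le; eauto|]. eapply le_trans; [eapply pair_le_l; eauto|].
  eapply pair_le_r; eauto.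
Qed.

Definition Emem s i k v := exists t, tripleA B i k v t /\ memA B t s.

Lemma Emem_le s i k v : Emem s i k v -> le v s.
Proof. intros [t [H1 H2]]. eapply le_trans; [apply (triple_le _ _ _ _ H1)|]. apply mem_le; auto. Qed.

Definition fEmem (s i k v : term) : formula :=
  fBEx (tSucc s) (fAnd (ftriple (lift i) (lift k) (lift v) (tVar 0)) (fmem (tVar 0) (lift s))).
Lemma sat_fEmem rho s i k v : sat B rho (fEmem s i k v) <-> Emem (ev rho s) (ev rho i) (ev rho k) (ev rho v).
Proof.
  unfold fEmem, Emem. ssat. split.
  - intros [t [_ H]]. eauto.
  - intros [t H]. exists t. split; auto. apply lt_S. apply mem_le. apply H.
Qed.
Lemma d0_fEmem s i k v : is_delta0 (fEmem s i k v) = true. Proof. unfold fEmem. d0tac. Qed.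
Opaque fEmem.

Definition Xs i j sM sN k x := exists y z, x = y *' z /\ Emem sM i k y /\ Emem sN k j z.
Definition fX (i j sM sN k x : term) : formula :=
  fBEx (tSucc sM) (fBEx (tSucc (lift sN)) (fAnd (fEq (lift (lift x)) (tTimes (tVar 1) (tVar 0)))
    (fAnd (fEmem (lift (lift sM)) (lift (lift i)) (lift (lift k)) (tVar 1))
          (fEmem (lift (lift sN)) (lift (lift k)) (lift (lift j)) (tVar 0))))).
Lemma sat_fX rho i j sM sN k x : sat B rho (fX i j sM sN k x) <->
  Xs (ev rho i) (ev rho j) (ev rho sM) (ev rho sN) (ev rho k) (ev rho x).
Proof.
  unfold fX, Xs. ssat. setoid_rewrite sat_fEmem. ssat. split.
  - intros [y [_ [z [_ H]]]]. eauto.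
  - intros [y [z H]]. exists y. split. { apply lt_S. eapply Emem_le. apply H. }
    exists z. split; auto. apply lt_S. eapply Emem_le. apply H.
Qed.
Lemma d0_fX i j sM sN k x : is_delta0 (fX i j sM sN k x) = true. Proof. unfold fX. d0tac. Qed.
Opaque fX.

Definition PHIs i j sM sN k a v := exists x, v = a +' x /\ Xs i j sM sN k x.
Definition fphi (i j sM sN k a v : term) : formula :=
  fBEx (tSucc v) (fAnd (fEq (lift v) (tPlus (lift a) (tVar 0))) (fX (lift i) (lift j) (lift sM) (lift sN) (lift k) (tVar 0))).
Lemma sat_fphi rho i j sM sN k a v : sat B rho (fphi i j sM sN k a v) <->
  PHIs (ev rho i) (ev rho j) (ev rho sM) (ev rho sN) (ev rho k) (ev rho a) (ev rho v).
Proof.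
  unfold fphi, PHIs. ssat. setoid_rewrite sat_fX. ssat. split.
  - intros [x [_ H]]. eauto.
  - intros [x [H1 H2]]. exists x. split; auto. apply lt_S. rewrite H1. apply le_addl.
Qed.
Lemma d0_fphi i j sM sN k a v : is_delta0 (fphi i j sM sN k a v) = true. Proof. unfold fphi. d0tac. Qed.
Opaque fphi.

Definition PSs i j sM sN K c d v :=
  betaA B c d o o /\ (forall k, lt k K -> exists a w, betaA B c d k a /\ betaA B c d (sc k) w /\ PHIs i j sM sN k a w)
  /\ betaA B c d K v.
Definition fPS (i j sM sN K c d v : term) : formula :=
  fAnd (fbeta c d tZero tZero) (fAnd (fBAll K (fBEx (tSucc (lift c)) (fBEx (tSucc (lift (lift c)))
     (fAnd (fbeta (lift (lift (lift c))) (lift (lift (lift d))) (tVar 2) (tVar 1))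
       (fAnd (fbeta (lift (lift (lift c))) (lift (lift (lift d))) (tSucc (tVar 2)) (tVar 0))
         (fphi (lift (lift (lift i))) (lift (lift (lift j))) (lift (lift (lift sM))) (lift (lift (lift sN))) (tVar 2) (tVar 1) (tVar 0)))))))
   (fbeta c d K v)).
Lemma sat_fPS rho i j sM sN K c d v : sat B rho (fPS i j sM sN K c d v) <->
  PSs (ev rho i) (ev rho j) (ev rho sM) (ev rho sN) (ev rho K) (ev rho c) (ev rho d) (ev rho v).
Proof.
  unfold fPS, PSs. ssat. setoid_rewrite sat_fphi. ssat. split.
  - intros [H1 [H2 H3]]. split; auto. split; auto. intros k Hk.
    destruct (H2 k Hk) as [a [_ [w [_ H]]]]. eauto.
  - intros [H1 [H2 H3]]. split; auto. split; auto. intros k Hk.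
    destruct (H2 k Hk) as [a [w [Ha [Hw Hp]]]]. exists a. split; [apply lt_S; eapply mod_le; eauto|].
    exists w. split; [apply lt_S; eapply mod_le; eauto|]. auto.
Qed.
Lemma d0_fPS i j sM sN K c d v : is_delta0 (fPS i j sM sN K c d v) = true. Proof. unfold fPS. d0tac. Qed.
Opaque fPS.

Definition PSIs W J K sM sN k t := exists i j c d v, lt i W /\ lt j W /\ lt c W /\ lt d W /\ lt v W /\
  k = i *' J +' j /\ lt j J /\ PSs i j sM sN K c d v /\ tripleA B i j v t.
Definition fPsi (W J K sM sN k t : term) : formula :=
  fBEx W (fBEx (lift W) (fBEx (lift (lift W)) (fBEx (lift (lift (lift W))) (fBEx (lift (lift (lift (lift W))))
   (fAnd (fEq (lift (lift (lift (lift (lift k))))) (tPlus (tTimes (tVar 4) (lift (lift (lift (lift (lift J)))))) (tVar 3)))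
   (fAnd (fLt (tVar 3) (lift (lift (lift (lift (lift J))))))
   (fAnd (fPS (tVar 4) (tVar 3) (lift (lift (lift (lift (lift sM))))) (lift (lift (lift (lift (lift sN)))))
             (lift (lift (lift (lift (lift K))))) (tVar 2) (tVar 1) (tVar 0))
         (ftriple (tVar 4) (tVar 3) (tVar 0) (lift (lift (lift (lift (lift t))))))))))))).
Lemma sat_fPsi rho W J K sM sN k t : sat B rho (fPsi W J K sM sN k t) <->
  PSIs (ev rho W) (ev rho J) (ev rho K) (ev rho sM) (ev rho sN) (ev rho k) (ev rho t).
Proof.
  unfold fPsi, PSIs. ssat. setoid_rewrite sat_fPS. ssat. split.
  - intros [i [Hi [j [Hj [c [Hc [d [Hd [v [Hv H]]]]]]]]]]. exists i, j, c, d, v. tauto.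
  - intros [i [j [c [d [v H]]]]]. exists i. split; [tauto|]. exists j. split; [tauto|].
    exists c. split; [tauto|]. exists d. split; [tauto|]. exists v. tauto.
Qed.
Lemma d0_fPsi W J K sM sN k t : is_delta0 (fPsi W J K sM sN k t) = true. Proof. unfold fPsi. d0tac. Qed.
Opaque fPsi.

Variables M N : B -> B -> B.

Definition Psum i j K c d v := betaA B c d o o /\
  (forall k a, lt k K -> betaA B c d k a -> betaA B c d (sc k) (a +' M i k *' N k j)) /\ betaA B c d K v.

Definition Xchar i j sM sN K := forall k, lt k K -> forall x, Xs i j sM sN k x <-> x = M i k *' N k j.

Lemma beta_exists c d k : exists a, betaA B c d k a.
Proof. apply mod_exists. apply q_sn0. Qed.

Lemma PS_Psum i j sM sN K c d v : Xchar i j sM sN K -> PSs i j sM sN K c d v -> Psum i j K c d v.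
Proof.
  intros HX [H1 [H2 H3]]. split; auto. split; auto.
  intros k a Hk Ha. destruct (H2 k Hk) as [a' [w [Ha' [Hw [x [Ex Hx]]]]]].
  rewrite (beta_fun _ _ _ _ _ Ha Ha'). apply (HX k Hk) in Hx. subst. auto.
Qed.

Lemma Psum_PS i j sM sN K c d v : Xchar i j sM sN K -> Psum i j K c d v -> PSs i j sM sN K c d v.
Proof.
  intros HX [H1 [H2 H3]]. split; auto. split; auto.
  intros k Hk. destruct (beta_exists c d k) as [a Ha]. exists a, (a +' M i k *' N k j).
  split; auto. split; auto. exists (M i k *' N k j). split; auto. apply (HX k Hk). auto.
Qed.

Definition phiR : Pred3.
  refine {| p3f := fun ps k a v => fphi (ps 0%nat) (ps 1%nat) (ps 2%nat) (ps 3%nat) k a v;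
            p3s := fun p k a v => PHIs (p 0%nat) (p 1%nat) (p 2%nat) (p 3%nat) k a v |}.
  - intros. apply sat_fphi.
  - intros. apply d0_fphi.
Defined.

Definition iotaR : Pred2.
  refine {| p2f := fun ps k a => fLe a (tTimes k (ps 4%nat));
            p2s := fun p k a => le a (k *' p 4%nat) |}.
  - intros. apply sat_fLe.
  - intros. apply d0_fLe.
Defined.

Lemma psum_exists i j sM sN K : Xchar i j sM sN K -> exists c d v, Psum i j K c d v.
Proof.
  intros HX.
  set (B0 := sM *' sN).
  set (p := fun n : nat => match n with 0 => i | 1 => j | 2 => sM | 3 => sN | _ => B0 end).
  destruct (d_exists (K *' B0) K) as [d [Hd0 [HdV Hdiv]]].
  assert (HxB : forall k, lt k K -> le (M i k *' N k j) B0).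
  { intros k Hk. assert (Xs i j sM sN k (M i k *' N k j)) as [y [z [E [Hy Hz]]]] by (apply (HX k Hk); auto).
    rewrite E. apply le_mul_mono; eapply Emem_le; eauto. }
  destruct (seq_code phiR iotaR p d K Hd0 Hdiv) as [c [C1 C2]].
  - exists o. simpl. rewrite mul0l. apply le_refl.
  - intros k a Hk Ha. simpl in *. exists (a +' M i k *' N k j). split.
    + exists (M i k *' N k j). split; auto. apply (HX k Hk). auto.
    + replace (sc k *' B0) with (k *' B0 +' B0) by sring. apply le_add_mono; auto.
  - intros k a Hk Ha. simpl in *. eapply le_trans; [exact Ha|]. eapply le_trans; [|exact HdV].
    apply le_mul_mono; auto. apply le_refl.
  - destruct (C1 K (le_refl K)) as [v [Hv _]]. exists c, d, v. split; [|split; auto].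
    + destruct (C1 o (le0 K)) as [a [Ha Hia]]. simpl in Hia. rewrite mul0l in Hia.
      assert (a = o) by (apply le_antisym; auto; apply le0). subst. auto.
    + intros k a Hk Ha. assert (HSk : le (sc k) K) by (apply lt_le; auto).
      destruct (C1 (sc k) HSk) as [w [Hw _]].
      destruct (C2 k a w Hk Ha Hw) as [x [Ex Hx]]. simpl in Ex, Hx.
      apply (HX k Hk) in Hx. subst. auto.
Qed.

Lemma psum_unique_le i j K1 c1 d1 v1 K2 c2 d2 v2 : le K1 K2 ->
  Psum i j K1 c1 d1 v1 -> Psum i j K2 c2 d2 v2 ->
  (forall k, ~ lt k K1 -> M i k *' N k j = o) -> v1 = v2.
Proof.
  intros HK [A0 [AS AK]] [B0 [BS BK]] Htail.
  assert (HA : forall k, le k K1 -> forall a b, betaA B c1 d1 k a -> betaA B c2 d2 k b -> a = b).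
  { indf (fImp (fLe (tVar 0) (tVar 1)) (fBAll (tSucc (tVar 2)) (fBAll (tSucc (tVar 5))
       (fImp (fbeta (tVar 4) (tVar 5) (tVar 2) (tVar 1)) (fImp (fbeta (tVar 6) (tVar 7) (tVar 2) (tVar 0)) (fEq (tVar 1) (tVar 0)))))))
       (scons B K1 (scons B c1 (scons B d1 (scons B c2 (scons B d2 env0))))).
    - ssat. split.
      + intros H Hle x y Hx Hy. apply (H Hle); auto; apply lt_S; eapply mod_le; eauto.
      + intros H Hle x _ y _ Hx Hy. eauto.
    - intros _ a b Ha Hb. rewrite (beta_fun _ _ _ _ _ Ha A0), (beta_fun _ _ _ _ _ Hb B0). auto.
    - intros k IH Hk a b Ha Hb.
      assert (Hk' : lt k K1) by (apply lt_le; auto).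
      destruct (beta_exists c1 d1 k) as [a0 Ha0]. destruct (beta_exists c2 d2 k) as [b0 Hb0].
      assert (E : a0 = b0) by (apply (IH (lt_to_le _ _ Hk')); auto). subst b0.
      rewrite (beta_fun _ _ _ _ _ Ha (AS k a0 Hk' Ha0)).
      rewrite (beta_fun _ _ _ _ _ Hb (BS k a0 (lt_le_trans _ _ _ Hk' HK) Hb0)). auto. }
  assert (HB : forall k, le K1 k -> le k K2 -> forall b, betaA B c2 d2 k b -> b = v1).
  { indf (fImp (fLe (tVar 1) (tVar 0)) (fImp (fLe (tVar 0) (tVar 2)) (fBAll (tSucc (tVar 3))
       (fImp (fbeta (tVar 4) (tVar 5) (tVar 1) (tVar 0)) (fEq (tVar 0) (tVar 6))))))
       (scons B K1 (scons B K2 (scons B c2 (scons B d2 (scons B v1 env0))))).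
    - ssat. split.
      + intros H H1 H2 y Hy. apply (H H1 H2); auto. apply lt_S; eapply mod_le; eauto.
      + intros H H1 H2 y _ Hy. eauto.
    - intros H1 H2 b Hb. assert (K1 = o) by (apply le_antisym; auto; apply le0). subst K1.
      symmetry. apply (HA o (le_refl _)); auto.
    - intros k IH H1 H2 b Hb. apply le_lt_eq in H1. destruct H1 as [H1| ->].
      + apply lt_S in H1. destruct (beta_exists c2 d2 k) as [b0 Hb0].
        assert (Hk2 : lt k K2) by (apply lt_le; auto).
        assert (E : b0 = v1) by (apply (IH H1); auto; apply lt_to_le; auto).
        rewrite (beta_fun _ _ _ _ _ Hb (BS k b0 Hk2 Hb0)).
        rewrite Htail; [rewrite q_add0; auto|]. apply le_not_lt; auto.
      + symmetry. apply (HA (sc k) (le_refl _)); auto. }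
  symmetry. apply (HB K2); auto. apply le_refl.
Qed.

Lemma psum_unique i j K1 c1 d1 v1 K2 c2 d2 v2 :
  Psum i j K1 c1 d1 v1 -> Psum i j K2 c2 d2 v2 ->
  (forall k, ~ lt k K1 -> M i k *' N k j = o) -> (forall k, ~ lt k K2 -> M i k *' N k j = o) -> v1 = v2.
Proof.
  intros H1 H2 T1 T2. destruct (le_total K1 K2) as [H|H].
  - eapply psum_unique_le; eauto.
  - symmetry. eapply psum_unique_le; eauto.
Qed.

Lemma Psum_zero i j K : (forall k, lt k K -> M i k = o) -> Psum i j K o o o.
Proof.
  intros HM. assert (Hb : forall k, betaA B o o k o) by (intros k; apply mod_small; apply lt0S).
  split; auto. split; auto. intros k a Hk Ha. rewrite (beta_fun _ _ _ _ _ Ha (Hb k)), HM; auto.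
  rewrite mul0l, q_add0. auto.
Qed.

Lemma Emem_char (F : B -> B -> B) I J s :
  (forall t, memA B t s <-> exists i k v, tripleA B i k v t /\ (lt i I /\ lt k J /\ v = F i k)) ->
  forall i k, lt i I -> lt k J -> forall y, Emem s i k y <-> y = F i k.
Proof.
  intros Hs i k Hi Hk y. split.
  - intros [t [Ht Hm]]. apply Hs in Hm. destruct Hm as [i' [k' [v' [Ht' [_ [_ ->]]]]]].
    destruct (triple_inj _ _ _ _ _ _ _ Ht Ht') as [-> [-> ->]]. auto.
  - intros ->. destruct (triple_exists i k (F i k)) as [t Ht]. exists t. split; auto.
    apply Hs. exists i, k, (F i k). auto.
Qed.

Lemma Xchar_of IM KN J sM sN i j :
  (forall t, memA B t sM <-> exists i k v, tripleA B i k v t /\ (lt i IM /\ lt k KN /\ v = M i k)) ->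
  (forall t, memA B t sN <-> exists i k v, tripleA B i k v t /\ (lt i KN /\ lt k J /\ v = N i k)) ->
  lt i IM -> lt j J -> Xchar i j sM sN KN.
Proof.
  intros HsM HsN Hi Hj k Hk x. split.
  - intros [y [z [-> [Hy Hz]]]]. rewrite (Emem_char M IM KN sM HsM i k Hi Hk y) in Hy.
    rewrite (Emem_char N KN J sN HsN k j Hk Hj z) in Hz. subst. auto.
  - intros ->. exists (M i k), (N k j). split; auto. split.
    + apply (Emem_char M IM KN sM HsM i k Hi Hk). auto.
    + apply (Emem_char N KN J sN HsN k j Hk Hj). auto.
Qed.

Lemma entry_exists (HM : good B M) (HN : good B N) i j : exists v, prod_entry B M N i j v.
Proof.
  destruct (HN (sc j)) as [KN [NI [sN HsN]]].
  destruct (HM KN) as [IM [MI [sM HsM]]].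
  assert (Tail : forall k, ~ lt k KN -> M i k *' N k j = o).
  { intros k Hk. destruct (classic (N k j = o)) as [E|E]; [rewrite E; apply q_mul0|].
    exfalso. apply Hk. apply (NI k j); auto. apply lt_Sn. }
  destruct (classic (lt i IM)) as [Hi|Hi].
  - destruct (psum_exists i j sM sN KN) as [c [d [v [P1 [P2 P3]]]]].
    { apply (Xchar_of IM KN (sc j)); auto. apply lt_Sn. }
    exists v, KN. split; auto. exists c, d. auto.
  - destruct (Psum_zero i j KN) as [P1 [P2 P3]].
    { intros k Hk. destruct (classic (M i k = o)) as [E|E]; auto. exfalso. apply Hi. eapply MI; eauto. }
    exists o, KN. split; auto. exists o, o. auto.
Qed.

Lemma prod_entry_Psum i j v : prod_entry B M N i j v ->
  exists K c d, (forall k, ~ lt k K -> M i k *' N k j = o) /\ Psum i j K c d v.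
Proof. intros [K [T [c [d [H1 [H2 H3]]]]]]. exists K, c, d. split; auto. split; auto. Qed.

Lemma lt_divpair I J i j : lt i I -> lt j J -> lt (i *' J +' j) (I *' J).
Proof.
  intros [z <-] Hj. apply lt_le_trans with (i *' J +' J).
  - rewrite (addC (i *' J) j), (addC (i *' J) J). apply lt_add_mono; auto. apply le_refl.
  - exists (z *' J). sring.
Qed.

Lemma div_lt I J i j k : k = i *' J +' j -> lt k (I *' J) -> lt i I.
Proof.
  intros -> H. destruct (lt_or_le i I) as [H1|H1]; auto. exfalso.
  apply (lt_not_le _ _ H). eapply le_trans; [|apply le_addr]. apply le_mul_mono; auto. apply le_refl.
Qed.

Definition chiR : Pred2.
  refine {| p2f := fun ps k w => fBEx w (fPsi (lift w) (lift (ps 0%nat)) (lift (ps 1%nat)) (lift (ps 2%nat)) (lift (ps 3%nat)) (lift k) (tVar 0));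
            p2s := fun p k w => exists t, lt t w /\ PSIs w (p 0%nat) (p 1%nat) (p 2%nat) (p 3%nat) k t |}.
  - intros. simpl. setoid_rewrite sat_fPsi. repeat setoid_rewrite evalt_lift. simpl. reflexivity.
  - intros. simpl. apply d0_fPsi.
Defined.

Definition iotaR2 : Pred2.
  refine {| p2f := fun ps k a => fAnd (fImp (fLt k (ps 4%nat)) (fPsi (ps 5%nat) (ps 0%nat) (ps 1%nat) (ps 2%nat) (ps 3%nat) k a)) (fLe a (ps 5%nat));
            p2s := fun p k a => (lt k (p 4%nat) -> PSIs (p 5%nat) (p 0%nat) (p 1%nat) (p 2%nat) (p 3%nat) k a) /\ le a (p 5%nat) |}.
  - intros. simpl. rewrite sat_fLt, sat_fPsi, sat_fLe. reflexivity.
  - intros. simpl. rewrite d0_fLt, d0_fPsi, d0_fLe. reflexivity.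
Defined.

Definition phiT : Pred3.
  refine {| p3f := fun _ _ _ _ => fEq tZero tZero; p3s := fun _ _ _ _ => True |}.
  - intros. simpl. tauto.
  - intros. reflexivity.
Defined.

Lemma PSIs_mono w W J K sM sN k t : PSIs w J K sM sN k t -> le w W -> PSIs W J K sM sN k t.
Proof.
  intros [i [j [c [d [v [H1 [H2 [H3 [H4 [H5 H6]]]]]]]]]] Hw.
  exists i, j, c, d, v.
  do 5 (split; [eapply lt_le_trans; eauto|]). exact H6.
Qed.

Lemma good_P (HM : good B M) (HN : good B N) (P : B -> B -> B)
  (HP : forall i j, prod_entry B M N i j (P i j)) : good B P.
Proof.
  intros J. destruct (HN J) as [KN [NI [sN HsN]]]. destruct (HM KN) as [IM [MI [sM HsM]]].
  assert (TailJ : forall i j, lt j J -> forall k, ~ lt k KN -> M i k *' N k j = o).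
  { intros i j Hj k Hk. destruct (classic (N k j = o)) as [E|E]; [rewrite E; apply q_mul0|].
    exfalso. apply Hk. apply (NI k j); auto. }
  assert (Pval : forall i j c d v, lt i IM -> lt j J -> PSs i j sM sN KN c d v -> v = P i j).
  { intros i j c d v Hi Hj Hps. apply PS_Psum in Hps; [|apply (Xchar_of IM KN J); auto].
    destruct (prod_entry_Psum _ _ _ (HP i j)) as [K [c' [d' [T Hp]]]].
    eapply psum_unique; eauto. }
  assert (Pex : forall i j, lt i IM -> lt j J -> exists c d, PSs i j sM sN KN c d (P i j)).
  { intros i j Hi Hj. assert (HX : Xchar i j sM sN KN) by (apply (Xchar_of IM KN J); auto).
    destruct (psum_exists i j sM sN KN HX) as [c [d [v Hp]]].
    assert (Ev : v = P i j) by (apply (Pval i j c d v); auto; apply Psum_PS; auto).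
    subst v. exists c, d. apply Psum_PS; auto. }
  exists IM. split.
  { intros i j Hj HP0. destruct (classic (lt i IM)) as [Hi|Hi]; auto. exfalso. apply HP0.
    destruct (prod_entry_Psum _ _ _ (HP i j)) as [K [c' [d' [T Hp]]]].
    symmetry. eapply psum_unique; [apply (Psum_zero i j KN)| exact Hp | apply TailJ; auto | exact T].
    intros k Hk. destruct (classic (M i k = o)) as [E|E]; auto. exfalso. apply Hi. eapply MI; eauto. }
  set (n := IM *' J).
  set (p0 := fun x : nat => match x with 0 => J | 1 => KN | 2 => sM | _ => sN end).
  destruct (collect chiR p0 n) as [W HW].
  { intros k Hk. simpl.
    assert (HJ : J <> o). { intros E. unfold n in Hk. rewrite E, q_mul0 in Hk. eapply not_lt0; eauto. }
    destruct (div_exists J HJ k) as [i [j [Ek Hj]]].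
    assert (Hi : lt i IM) by (eapply div_lt; eauto).
    destruct (Pex i j Hi Hj) as [c [d Hps]].
    destruct (triple_exists i j (P i j)) as [t Ht].
    exists (sc (i +' j +' c +' d +' P i j +' t)), t.
    split; [apply lt_S; exists (i +' j +' c +' d +' P i j); ring|].
    exists i, j, c, d, (P i j).
    split; [apply lt_S; exists (j +' c +' d +' P i j +' t); ring|].
    split; [apply lt_S; exists (i +' c +' d +' P i j +' t); ring|].
    split; [apply lt_S; exists (i +' j +' d +' P i j +' t); ring|].
    split; [apply lt_S; exists (i +' j +' c +' P i j +' t); ring|].
    split; [apply lt_S; exists (i +' j +' c +' d +' t); ring|].
    split; [exact Ek|]. split; [exact Hj|]. split; [exact Hps| exact Ht]. }
  assert (HW' : forall k, lt k n -> exists t, le t W /\ PSIs W J KN sM sN k t).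
  { intros k Hk. destruct (HW k Hk) as [w [Hw [t [Ht Hpsi]]]]. exists t. split.
    - apply lt_to_le. eapply lt_trans; eauto.
    - eapply PSIs_mono; eauto. apply lt_to_le; auto. }
  set (p := fun x : nat => match x with 0 => J | 1 => KN | 2 => sM | 3 => sN | 4 => n | _ => W end).
  destruct (d_exists W n) as [d [Hd0 [HdW Hdiv]]].
  destruct (seq_code phiT iotaR2 p d n Hd0 Hdiv) as [c [C1 _]].
  - simpl. destruct (classic (lt o n)) as [H|H].
    + destruct (HW' o H) as [t [Ht1 Ht2]]. exists t. split; auto.
    + exists o. split; [intros; contradiction| apply le0].
  - intros k a Hk _. simpl. destruct (classic (lt (sc k) n)) as [H|H].
    + destruct (HW' (sc k) H) as [t [Ht1 Ht2]]. exists t. split; auto.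
    + exists o. split; auto. split; [intros; contradiction| apply le0].
  - intros k a _ [_ Ha]. simpl in Ha. eapply le_trans; eauto.
  - destruct (pair_exists c d) as [pc Hpc]. destruct (pair_exists n pc) as [s Hs].
    exists s. intros t. split.
    + intros [n' [c' [d' [p' [H1 [H2 [k [Hk Hb]]]]]]]].
      destruct (pair_inj _ _ _ _ _ H2 Hs) as [-> ->].
      destruct (pair_inj _ _ _ _ _ H1 Hpc) as [-> ->].
      destruct (C1 k (lt_to_le _ _ Hk)) as [a [Ha [Hia _]]]. simpl in Hia.
      rewrite (beta_fun _ _ _ _ _ Ha Hb) in Hia.
      destruct (Hia Hk) as [i [j [c'' [d'' [v [_ [_ [_ [_ [_ [Ek [Hj [Hps Ht]]]]]]]]]]]]].
      assert (Hi : lt i IM) by (eapply div_lt; eauto).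
      exists i, j, v. split; auto. split; auto. split; auto. eapply Pval; eauto.
    + intros [i [j [v [Ht [Hi [Hj ->]]]]]].
      set (k := i *' J +' j).
      assert (Hk : lt k n) by (apply lt_divpair; auto).
      destruct (C1 k (lt_to_le _ _ Hk)) as [a [Ha [Hia _]]]. simpl in Hia.
      destruct (Hia Hk) as [i' [j' [c'' [d'' [v [_ [_ [_ [_ [_ [Ek [Hj' [Hps Ht']]]]]]]]]]]]].
      destruct (div_unique J i j i' j' Ek Hj Hj') as [<- <-].
      rewrite (Pval i j c'' d'' v Hi Hj Hps) in Ht'.
      rewrite (triple_fun _ _ _ _ _ Ht' Ht) in Ha.
      exists n, c, d, pc. split; auto. split; auto. exists k. auto.
Qed.

End Arith.

Theorem lemma2p3 (B : arith_structure) (HB : models_ISigma1 B)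
  (M N : B -> B -> B) (HM : good B M) (HN : good B N) :
  exists P : B -> B -> B,
    (forall i j, prod_entry B M N i j (P i j)) /\ good B P.
Proof.
  destruct HB as [HQ HI].
  pose (P := fun i j => proj1_sig (constructive_indefinite_description _ (entry_exists B HQ HI M N HM HN i j))).
  assert (HP : forall i j, prod_entry B M N i j (P i j)) by (intros; unfold P; apply proj2_sig).
  exists P. split; auto. apply (good_P B HQ HI M N HM HN P HP).
Qed.
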